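(* Let $f:(\mathbb R^2,q)\to(\mathbb R^3,p)$ be a smooth germ with a corank 1 singularity at $q$ whose curvature parabola $\Delta_p$ is a non-degenerate parabola or a half-line, let $(u,v)$ be a coordinate system with $f_u(q)\ne0$ and $f_v(q)=0$, and let $E=\langle f_u,f_u\rangle$, $F=\langle f_u,f_v\rangle$, $G=\langle f_v,f_v\rangle$ be the coefficients of the first fundamental form. Then, evaluating at $q$, $$\kappa_a(p)=\frac{\big(\frac{E_u}{2}F_v-E(F_{uv}-\frac{E_{vv}}{2})\big)\big(F_v^2-E\frac{G_{vv}}{2}\big)-\big(\frac{E_v}{2}F_v-E\frac{G_{uv}}{2}\big)^2}{\Big(E\big(E\frac{G_{vv}}{2}-F_v^2\big)\Big)^{3/2}},$$ where subscripts denote partial derivatives.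
   Context: $T_pM=\operatorname{im}df_q$, $N_pM$ its orthogonal complement with a fixed orientation. First fundamental form $I(X,Y)=\langle df_qX,df_qY\rangle$; second fundamental form $II$: the symmetric bilinear map $T_q\mathbb R^2\times T_q\mathbb R^2\to N_pM$ with $II(\partial_u,\partial_u)=f_{uu}(q)^\perp$, $II(\partial_u,\partial_v)=f_{uv}(q)^\perp$, $II(\partial_v,\partial_v)=f_{vv}(q)^\perp$ ($\perp$ = orthogonal projection to $N_pM$). Curvature parabola $\Delta_p=\{II(X,X): I(X,X)=1\}\subset N_pM$. Axial vector $v_a$: if $\Delta_p$ is a non-degenerate parabola, the unit vector along its axis of symmetry pointing to its interior; if $\Delta_p$ is a half-line, the unit vector in the direction in which the half-line extends. Axial curvature $\kappa_a(p)=\min\{\langle II(X,X),v_a\rangle: I(X,X)=1\}$. *)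

(* Defs.v *)
From Stdlib Require Import Reals ClassicalEpsilon List.
From Coquelicot Require Import Coquelicot.
Open Scope R_scope.

Definition R3 := (R * R * R)%type.
Definition mk3 (x y z : R) : R3 := (x, y, z).
Definition c1 (w : R3) : R := fst (fst w).
Definition c2 (w : R3) : R := snd (fst w).
Definition c3 (w : R3) : R := snd w.
Definition vzero : R3 := mk3 0 0 0.
Definition vadd (x y : R3) : R3 := mk3 (c1 x + c1 y) (c2 x + c2 y) (c3 x + c3 y).
Definition vscal (a : R) (x : R3) : R3 := mk3 (a * c1 x) (a * c2 x) (a * c3 x).
Definition vsub (x y : R3) : R3 := vadd x (vscal (-1) y).
Definition dot (x y : R3) : R := c1 x * c1 y + c2 x * c2 y + c3 x * c3 y.

Definition pu (g : R -> R -> R) : R -> R -> R := fun u v => Derive (fun t => g t v) u.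
Definition pv (g : R -> R -> R) : R -> R -> R := fun u v => Derive (fun t => g u t) v.

(** iterated partial derivative along a word of directions (true = u, false = v) *)
Fixpoint pd (s : list bool) (g : R -> R -> R) : R -> R -> R :=
  match s with
  | nil => g
  | b :: s' => (if b then pu else pv) (pd s' g)
  end.

Definition smooth2 (g : R -> R -> R) : Prop :=
  forall (s : list bool) (u v : R),
    continuous (fun p : R * R => pd s g (fst p) (snd p)) (u, v) /\
    ex_derive (fun t => pd s g t v) u /\
    ex_derive (fun t => pd s g u t) v.

Definition smooth_map (f : R -> R -> R3) : Prop :=
  smooth2 (fun u v => c1 (f u v)) /\ smooth2 (fun u v => c2 (f u v)) /\
  smooth2 (fun u v => c3 (f u v)).

Definition Vpu (f : R -> R -> R3) : R -> R -> R3 := fun u v =>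
  mk3 (pu (fun a b => c1 (f a b)) u v) (pu (fun a b => c2 (f a b)) u v)
      (pu (fun a b => c3 (f a b)) u v).
Definition Vpv (f : R -> R -> R3) : R -> R -> R3 := fun u v =>
  mk3 (pv (fun a b => c1 (f a b)) u v) (pv (fun a b => c2 (f a b)) u v)
      (pv (fun a b => c3 (f a b)) u v).

Definition EE (f : R -> R -> R3) : R -> R -> R := fun u v => dot (Vpu f u v) (Vpu f u v).
Definition FF (f : R -> R -> R3) : R -> R -> R := fun u v => dot (Vpu f u v) (Vpv f u v).
Definition GG (f : R -> R -> R3) : R -> R -> R := fun u v => dot (Vpv f u v) (Vpv f u v).

Definition dfq (f : R -> R -> R3) (u0 v0 a b : R) : R3 :=
  vadd (vscal a (Vpu f u0 v0)) (vscal b (Vpv f u0 v0)).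

Definition corank1_at (f : R -> R -> R3) (u0 v0 : R) : Prop :=
  (exists a b, dfq f u0 v0 a b <> vzero) /\
  (exists a b, (a <> 0 \/ b <> 0) /\ dfq f u0 v0 a b = vzero).

Definition tangent_space (f : R -> R -> R3) (u0 v0 : R) : R3 -> Prop :=
  fun t => exists a b, t = dfq f u0 v0 a b.

Definition is_normal_proj (T : R3 -> Prop) (w n : R3) : Prop :=
  (forall t, T t -> dot n t = 0) /\ T (vsub w n).

Definition nproj (T : R3 -> Prop) (w : R3) : R3 :=
  epsilon (inhabits vzero) (is_normal_proj T w).

Definition first_ff (f : R -> R -> R3) (u0 v0 a b : R) : R :=
  dot (dfq f u0 v0 a b) (dfq f u0 v0 a b).

Definition second_ff (f : R -> R -> R3) (u0 v0 a b : R) : R3 :=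
  let T := tangent_space f u0 v0 in
  let IIuu := nproj T (Vpu (Vpu f) u0 v0) in
  let IIuv := nproj T (Vpv (Vpu f) u0 v0) in
  let IIvv := nproj T (Vpv (Vpv f) u0 v0) in
  vadd (vadd (vscal (a ^ 2) IIuu) (vscal (2 * a * b) IIuv)) (vscal (b ^ 2) IIvv).

Definition curv_parabola (f : R -> R -> R3) (u0 v0 : R) : R3 -> Prop :=
  fun n => exists a b, first_ff f u0 v0 a b = 1 /\ n = second_ff f u0 v0 a b.

(** D is a non-degenerate parabola with axis direction va pointing to its interior:
    D = { V + s e1 + alpha s^2 va | s in R }, alpha > 0, (e1, va) orthonormal *)
Definition parabola_axis (D : R3 -> Prop) (va : R3) : Prop :=
  exists (V e1 : R3) (alpha : R),
    0 < alpha /\ dot e1 e1 = 1 /\ dot va va = 1 /\ dot e1 va = 0 /\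
    forall n, D n <-> exists s, n = vadd (vadd V (vscal s e1)) (vscal (alpha * s ^ 2) va).

Definition halfline_dir (D : R3 -> Prop) (va : R3) : Prop :=
  exists V : R3, dot va va = 1 /\
    forall n, D n <-> exists t, 0 <= t /\ n = vadd V (vscal t va).

Definition is_nondeg_parabola (D : R3 -> Prop) : Prop := exists va, parabola_axis D va.
Definition is_halfline (D : R3 -> Prop) : Prop := exists va, halfline_dir D va.

Definition axial_vector (D : R3 -> Prop) (va : R3) : Prop :=
  parabola_axis D va \/ halfline_dir D va.

Definition is_min (S : R -> Prop) (m : R) : Prop := S m /\ forall x, S x -> m <= x.

(** the set { <II(X,X), va> : I(X,X) = 1 } whose minimum is kappa_a(p) *)
Definition axial_values (f : R -> R -> R3) (u0 v0 : R) (va : R3) : R -> Prop :=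
  fun r => exists a b, first_ff f u0 v0 a b = 1 /\ r = dot (second_ff f u0 v0 a b) va.

(* Main.v *)
Require Import Defs.
From Stdlib Require Import Reals.
From Coquelicot Require Import Coquelicot.
Open Scope R_scope.
From Stdlib Require Import Lra Psatz List FunctionalExtensionality ClassicalEpsilon.
Import Defs.

Lemma pd_app s s' g : pd s (pd s' g) = pd (s ++ s') g.
Proof. induction s as [|b s IH]; simpl; [reflexivity| rewrite IH; reflexivity]. Qed.

Lemma smooth2_pd s g : smooth2 g -> smooth2 (pd s g).
Proof. intros H s' u v. rewrite pd_app. apply H. Qed.

Lemma smooth2_pu g : smooth2 g -> smooth2 (pu g).
Proof. intro H. exact (smooth2_pd (true :: nil) g H). Qed.
Lemma smooth2_pv g : smooth2 g -> smooth2 (pv g).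
Proof. intro H. exact (smooth2_pd (false :: nil) g H). Qed.

Definition Exu (g : R -> R -> R) := forall u v, ex_derive (fun t => g t v) u.
Definition Exv (g : R -> R -> R) := forall u v, ex_derive (fun t => g u t) v.

Lemma smooth2_Exu g : smooth2 g -> Exu g.
Proof. intros H u v. exact (proj1 (proj2 (H nil u v))). Qed.
Lemma smooth2_Exv g : smooth2 g -> Exv g.
Proof. intros H u v. exact (proj2 (proj2 (H nil u v))). Qed.

Definition fadd (g h : R -> R -> R) := fun u v => g u v + h u v.
Definition fmul (g h : R -> R -> R) := fun u v => g u v * h u v.

Lemma Exu_add g h : Exu g -> Exu h -> Exu (fadd g h).
Proof. intros Hg Hh u v. unfold fadd. exact (ex_derive_plus (fun t => g t v) (fun t => h t v) u (Hg u v) (Hh u v)). Qed.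
Lemma Exu_mul g h : Exu g -> Exu h -> Exu (fmul g h).
Proof. intros Hg Hh u v. unfold fmul. apply ex_derive_mult; auto. Qed.
Lemma Exv_add g h : Exv g -> Exv h -> Exv (fadd g h).
Proof. intros Hg Hh u v. unfold fadd. exact (ex_derive_plus (fun t => g u t) (fun t => h u t) v (Hg u v) (Hh u v)). Qed.
Lemma Exv_mul g h : Exv g -> Exv h -> Exv (fmul g h).
Proof. intros Hg Hh u v. unfold fmul. apply ex_derive_mult; auto. Qed.

Lemma pu_add g h : Exu g -> Exu h -> pu (fadd g h) = fadd (pu g) (pu h).
Proof. intros Hg Hh. apply functional_extensionality; intro u;
  apply functional_extensionality; intro v. unfold pu, fadd.
  exact (Derive_plus (fun t => g t v) (fun t => h t v) u (Hg u v) (Hh u v)). Qed.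
Lemma pv_add g h : Exv g -> Exv h -> pv (fadd g h) = fadd (pv g) (pv h).
Proof. intros Hg Hh. apply functional_extensionality; intro u;
  apply functional_extensionality; intro v. unfold pv, fadd.
  exact (Derive_plus (fun t => g u t) (fun t => h u t) v (Hg u v) (Hh u v)). Qed.
Lemma pu_mul g h : Exu g -> Exu h -> pu (fmul g h) = fadd (fmul (pu g) h) (fmul g (pu h)).
Proof. intros Hg Hh. apply functional_extensionality; intro u;
  apply functional_extensionality; intro v. unfold pu, fadd, fmul.
  exact (Derive_mult (fun t => g t v) (fun t => h t v) u (Hg u v) (Hh u v)). Qed.
Lemma pv_mul g h : Exv g -> Exv h -> pv (fmul g h) = fadd (fmul (pv g) h) (fmul g (pv h)).
Proof. intros Hg Hh. apply functional_extensionality; intro u;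
  apply functional_extensionality; intro v. unfold pv, fadd, fmul.
  exact (Derive_mult (fun t => g u t) (fun t => h u t) v (Hg u v) (Hh u v)). Qed.

Lemma schwarz g : smooth2 g -> pu (pv g) = pv (pu g).
Proof.
  intro H. apply functional_extensionality; intro x;
  apply functional_extensionality; intro y. unfold pu, pv.
  apply Schwarz.
  - exists (mkposreal 1 Rlt_0_1). intros u v _ _.
    pose proof (smooth2_Exu _ H) as H1. pose proof (smooth2_Exv _ H) as H2.
    pose proof (smooth2_Exu _ (smooth2_pv _ H)) as H3.
    pose proof (smooth2_Exv _ (smooth2_pu _ H)) as H4.
    unfold Exu, Exv, pu, pv in *. auto.
  - apply continuity_2d_pt_filterlim. exact (proj1 (H (true :: false :: nil) x y)).
  - apply continuity_2d_pt_filterlim. exact (proj1 (H (false :: true :: nil) x y)).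
Qed.


Create HintDb sm.
#[local] Hint Resolve Exu_add Exu_mul Exv_add Exv_mul smooth2_Exu smooth2_Exv smooth2_pu smooth2_pv : sm.

Ltac expand :=
  repeat (first [ rewrite pu_add by (auto 10 with sm) | rewrite pv_add by (auto 10 with sm)
                | rewrite pu_mul by (auto 10 with sm) | rewrite pv_mul by (auto 10 with sm)]).

Ltac expand_in H :=
  repeat (first [ rewrite pu_add in H by (auto 10 with sm) | rewrite pv_add in H by (auto 10 with sm)
                | rewrite pu_mul in H by (auto 10 with sm) | rewrite pv_mul in H by (auto 10 with sm)]).

Definition sum3 (h : (R -> R -> R) -> R -> R -> R) (k : (R -> R -> R) -> R -> R -> R) g1 g2 g3 :=
  fadd (fadd (fmul (h g1) (k g1)) (fmul (h g2) (k g2))) (fmul (h g3) (k g3)).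

Lemma values g1 g2 g3 u0 v0 :
  smooth2 g1 -> smooth2 g2 -> smooth2 g3 ->
  pv g1 u0 v0 = 0 -> pv g2 u0 v0 = 0 -> pv g3 u0 v0 = 0 ->
  let E := sum3 pu pu g1 g2 g3 in
  let F := sum3 pu pv g1 g2 g3 in
  let G := sum3 pv pv g1 g2 g3 in
  let a1 := pu g1 u0 v0 in let a2 := pu g2 u0 v0 in let a3 := pu g3 u0 v0 in
  let m1 := pu (pu g1) u0 v0 in let m2 := pu (pu g2) u0 v0 in let m3 := pu (pu g3) u0 v0 in
  let n1 := pv (pu g1) u0 v0 in let n2 := pv (pu g2) u0 v0 in let n3 := pv (pu g3) u0 v0 in
  let w1 := pv (pv g1) u0 v0 in let w2 := pv (pv g2) u0 v0 in let w3 := pv (pv g3) u0 v0 in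
  pu E u0 v0 = 2 * (m1 * a1 + m2 * a2 + m3 * a3) /\
  pv E u0 v0 = 2 * (n1 * a1 + n2 * a2 + n3 * a3) /\
  pv F u0 v0 = a1 * w1 + a2 * w2 + a3 * w3 /\
  pv (pv G) u0 v0 = 2 * (w1 * w1 + w2 * w2 + w3 * w3) /\
  pv (pu G) u0 v0 = 2 * (n1 * w1 + n2 * w2 + n3 * w3) /\
  pv (pu F) u0 v0 - pv (pv E) u0 v0 / 2 = m1 * w1 + m2 * w2 + m3 * w3.
Proof.
  intros H1 H2 H3 Z1 Z2 Z3 E F G.
  remember (pu E) as PuE eqn:HPuE. remember (pv E) as PvE eqn:HPvE.
  remember (pu F) as PuF eqn:HPuF. remember (pv F) as PvF eqn:HPvF.
  remember (pu G) as PuG eqn:HPuG. remember (pv G) as PvG eqn:HPvG.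
  subst E F G. unfold sum3 in *.
  expand_in HPuE. expand_in HPvE. expand_in HPuF. expand_in HPvF. expand_in HPuG. expand_in HPvG.
  subst PuE PvE PuF PvF PuG PvG.
  expand.
  rewrite (schwarz g1 H1), (schwarz g2 H2), (schwarz g3 H3).
  unfold fadd, fmul. rewrite Z1, Z2, Z3.
  repeat split; field.
Qed.


Lemma R3_ext x y : c1 x = c1 y -> c2 x = c2 y -> c3 x = c3 y -> x = y.
Proof. destruct x as [[x1 x2] x3], y as [[y1 y2] y3]; unfold c1, c2, c3; simpl; intros; subst; reflexivity. Qed.

Lemma dot_vadd_l x y z : dot (vadd x y) z = dot x z + dot y z.
Proof. unfold dot, vadd, mk3, c1, c2, c3; simpl; ring. Qed.
Lemma dot_vscal_l a x z : dot (vscal a x) z = a * dot x z.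
Proof. unfold dot, vscal, mk3, c1, c2, c3; simpl; ring. Qed.
Lemma dot_comm x y : dot x y = dot y x.
Proof. unfold dot; ring. Qed.

Definition SS (M U W : R3) (a b : R) : R3 :=
  vadd (vadd (vscal (a ^ 2) M) (vscal (2 * a * b) U)) (vscal (b ^ 2) W).

Lemma dot_SS M U W a b y : dot (SS M U W a b) y = a^2 * dot M y + 2*a*b * dot U y + b^2 * dot W y.
Proof. unfold SS. rewrite !dot_vadd_l, !dot_vscal_l. ring. Qed.

Lemma SS_neg M U W a b : SS M U W (-a) b = SS M U W a (-b).
Proof. unfold SS, vadd, vscal, mk3, c1, c2, c3; simpl. f_equal; [f_equal|]; ring. Qed.

Lemma SS_W M U W a : W = vadd (vscal (/2) (vadd (SS M U W a 1) (SS M U W a (-1)))) (vscal (-1) (SS M U W a 0)).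
Proof. apply R3_ext; unfold SS, vadd, vscal, mk3, c1, c2, c3; simpl; field. Qed.

Lemma sq_eq_cases a b : a^2 = b^2 -> a = b \/ a = -b.
Proof. intro H. assert ((a-b)*(a+b) = 0) by (rewrite <- (Rminus_diag_eq _ _ H); ring).
  apply Rmult_integral in H0. lra. Qed.

Lemma axial_abs (E : R) (M U W va : R3) (D : R3 -> Prop) :
  0 < E ->
  (forall n, D n <-> exists a b, a^2 * E = 1 /\ n = SS M U W a b) ->
  axial_vector D va ->
  dot va va = 1 /\ exists w, 0 < w /\ W = vscal w va.
Proof.
  intros HE HD Hax.
  set (a0 := / sqrt E).
  assert (Hs : 0 < sqrt E) by (apply sqrt_lt_R0; lra).
  assert (Ha0 : a0^2 * E = 1).
  { unfold a0. rewrite <- (sqrt_sqrt E) at 2 by lra. field. lra. }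
  assert (Hx : forall t, D (SS M U W a0 t)) by (intro t; apply HD; exists a0, t; auto).
  assert (Hsurj : forall n, D n -> exists t, n = SS M U W a0 t).
  { intros n Hn. apply HD in Hn. destruct Hn as (a & b & Hab & ->).
    assert (a^2 = a0^2) by (apply Rmult_eq_reg_r with E; lra).
    destruct (sq_eq_cases _ _ H) as [-> | ->]. exists b; auto.
    exists (-b). apply SS_neg. }
  assert (HW := SS_W M U W a0).
  destruct Hax as [Hpa | Hhl].
  - destruct Hpa as (V & e1 & al & Hal & He1 & Hva & He1va & Hpar).
    split; [exact Hva|].
    assert (key : forall t, exists s, SS M U W a0 t = vadd (vadd V (vscal s e1)) (vscal (al * s^2) va)).
    { intro t. apply Hpar. apply Hx. }
    set (p0 := a0^2 * dot M e1 - dot V e1). set (p1 := 2*a0*dot U e1). set (p2 := dot W e1).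
    set (q0 := a0^2 * dot M va - dot V va). set (q1 := 2*a0*dot U va). set (q2 := dot W va).
    assert (key2 : forall t s, SS M U W a0 t = vadd (vadd V (vscal s e1)) (vscal (al * s^2) va) ->
       p0 + p1*t + p2*t^2 = s /\ q0 + q1*t + q2*t^2 = al * s^2).
    { intros t s Hts. split.
      - assert (h := f_equal (fun z => dot z e1) Hts). simpl in h.
        rewrite dot_SS, !dot_vadd_l, !dot_vscal_l in h. rewrite (dot_comm va e1) in h.
        unfold p0, p1, p2. rewrite He1va, He1 in h. nra.
      - assert (h := f_equal (fun z => dot z va) Hts). simpl in h.
        rewrite dot_SS, !dot_vadd_l, !dot_vscal_l in h.
        unfold q0, q1, q2. rewrite He1va, Hva in h. nra. }
    destruct (key (-2)) as [sA hA]. destruct (key (-1)) as [sB hB].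
    destruct (key 0) as [sC hC]. destruct (key 1) as [sD hD]. destruct (key 2) as [sF hF].
    destruct (key2 _ _ hA) as [hA1 hA2]. destruct (key2 _ _ hB) as [hB1 hB2].
    destruct (key2 _ _ hC) as [hC1 hC2]. destruct (key2 _ _ hD) as [hD1 hD2].
    destruct (key2 _ _ hF) as [hF1 hF2].
    assert (al * p2^2 = 0).
    { rewrite <- hA1, <- hB1, <- hC1, <- hD1, <- hF1 in *. lra. }
    assert (Hp2 : p2 = 0).
    { apply Rmult_integral in H. destruct H; [lra|]. nra. }
    assert (Hq2 : q2 = al * p1^2).
    { rewrite <- hB1, <- hC1, <- hD1 in *. rewrite Hp2 in *. lra. }
    assert (Hp1 : p1 <> 0).
    { destruct (Hsurj (vadd (vadd V (vscal (p0+1) e1)) (vscal (al * (p0+1)^2) va))) as [t Ht].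
      { apply Hpar. exists (p0+1). reflexivity. }
      symmetry in Ht. destruct (key2 _ _ Ht) as [h1 _]. rewrite Hp2 in h1. intro Hz. rewrite Hz in h1. lra. }
    exists q2. split.
    + rewrite Hq2. apply Rmult_lt_0_compat; [lra|]. apply pow2_gt_0. exact Hp1.
    + set (c := (sD + sB - 2*sC)/2). set (d := al*(sD^2 + sB^2 - 2*sC^2)/2).
      assert (HW2 : W = vadd (vscal c e1) (vscal d va)).
      { rewrite HW. rewrite hD, hB, hC. apply R3_ext; unfold c, d, vadd, vscal, mk3, c1, c2, c3; simpl; field. }
      assert (Hc : p2 = c).
      { unfold p2. rewrite HW2, dot_vadd_l, !dot_vscal_l, (dot_comm va e1), He1va, He1. ring. }
      assert (Hd : q2 = d).
      { unfold q2. rewrite HW2, dot_vadd_l, !dot_vscal_l, He1va, Hva. ring. }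
      rewrite HW2, <- Hc, <- Hd, Hp2. apply R3_ext; unfold vadd, vscal, mk3, c1, c2, c3; simpl; ring.
  - destruct Hhl as (V & Hva & Hhal).
    split; [exact Hva|].
    assert (key : forall t, exists s, 0 <= s /\ SS M U W a0 t = vadd V (vscal s va)).
    { intro t. apply Hhal. apply Hx. }
    destruct (key (-1)) as (sB & sB0 & hB).
    destruct (key 0) as (sC & sC0 & hC). destruct (key 1) as (sD & sD0 & hD).
    set (w := (sD + sB - 2*sC)/2).
    assert (HW2 : W = vscal w va).
    { rewrite HW. rewrite hD, hB, hC. apply R3_ext; unfold w, vadd, vscal, mk3, c1, c2, c3; simpl; field. }
    exists w. split; [|exact HW2].
    set (r0 := a0^2 * dot M va - dot V va). set (r1 := 2*a0*dot U va).
    assert (key2 : forall t s, SS M U W a0 t = vadd V (vscal s va) -> r0 + r1*t + w*t^2 = s).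
    { intros t s Hts. assert (h := f_equal (fun z => dot z va) Hts). simpl in h.
      rewrite dot_SS, !dot_vadd_l, !dot_vscal_l, HW2, dot_vscal_l, Hva in h.
      unfold r0, r1. lra. }
    assert (Hpos : forall t, 0 <= r0 + r1*t + w*t^2).
    { intro t. destruct (key t) as (s & s0 & hs). rewrite (key2 _ _ hs). exact s0. }
    assert (Hon : forall s, 0 <= s -> exists t, r0 + r1*t + w*t^2 = s).
    { intros s s0. destruct (Hsurj (vadd V (vscal s va))) as [t Ht].
      { apply Hhal. exists s. auto. }
      exists t. apply key2. symmetry; exact Ht. }
    assert (Hr0 : 0 <= r0) by (specialize (Hpos 0); lra).
    destruct (Rlt_or_le 0 w) as [Hw|Hw]; [exact Hw|exfalso].
    destruct (Rle_lt_or_eq_dec w 0 Hw) as [Hw'|Hw'].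
    + destruct (Hon (r0 + r1^2/(-w) + 1)) as [t Ht].
      { assert (0 <= r1^2/(-w)). { apply Rdiv_le_0_compat; [nra|lra]. } lra. }
      assert (h : -w * (r1*t + w*t^2) = r1^2 + (-w)).
      { assert (r1*t + w*t^2 = r1^2/(-w) + 1) by lra. rewrite H. field. lra. }
      nra.
    + rewrite Hw' in *.
      destruct (Hon (r0 + 1)) as [t Ht]; [lra|].
      assert (r1 <> 0) by (intro Hz; rewrite Hz in Ht; lra).
      specialize (Hpos (-(r0+1)/r1)).
      assert (r0 + r1 * (- (r0 + 1) / r1) + 0 * (- (r0 + 1) / r1) ^ 2 = -1) by (field; auto).
      lra.
Qed.


Ltac vunf := unfold dot, vsub, vadd, vscal, vzero, mk3, c1, c2, c3 in *; simpl in *.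

Lemma dot_pos x : x <> vzero -> 0 < dot x x.
Proof.
  destruct x as [[x1 x2] x3]. intro H.
  destruct (Req_dec x1 0); [destruct (Req_dec x2 0); [destruct (Req_dec x3 0)|]|].
  - subst. exfalso. apply H. reflexivity.
  - vunf. nra.
  - vunf. nra.
  - vunf. nra.
Qed.

Lemma nproj_line (T : R3 -> Prop) (a w : R3) : 0 < dot a a ->
  (forall t, T t <-> exists l, t = vscal l a) ->
  nproj T w = vsub w (vscal (dot w a / dot a a) a).
Proof.
  intros HE HT.
  set (cand := vsub w (vscal (dot w a / dot a a) a)).
  assert (Hc : is_normal_proj T w cand).
  { split.
    - intros t Ht. apply HT in Ht. destruct Ht as (l & ->). unfold cand.
      destruct a as [[a1 a2] a3], w as [[w1 w2] w3]. vunf. field. lra.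
    - apply HT. exists (dot w a / dot a a). unfold cand.
      apply R3_ext; destruct a as [[a1 a2] a3], w as [[w1 w2] w3]; vunf; ring. }
  unfold nproj.
  pose proof (epsilon_spec (inhabits vzero) (is_normal_proj T w) (ex_intro _ cand Hc)) as Hn.
  revert Hn. generalize (epsilon (inhabits vzero) (is_normal_proj T w)). intros n [Hn1 Hn2].
  apply HT in Hn2. destruct Hn2 as (l & Hl).
  assert (Hna : dot n a = 0).
  { apply Hn1, HT. exists 1. apply R3_ext; vunf; ring. }
  destruct a as [[a1 a2] a3], w as [[w1 w2] w3], n as [[n1 n2] n3]. vunf.
  injection Hl; intros h3 h2 h1.
  assert (l = (w1*a1+w2*a2+w3*a3)/(a1*a1+a2*a2+a3*a3)).
  { assert (n1 = w1 - l*a1) by lra. assert (n2 = w2 - l*a2) by lra. assert (n3 = w3 - l*a3) by lra.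
    subst n1 n2 n3.
    assert (l*(a1*a1+a2*a2+a3*a3) = w1*a1+w2*a2+w3*a3) by lra.
    rewrite <- H. field. lra. }
  subst l. apply R3_ext; vunf; lra.
Qed.

Lemma final_alg a1 a2 a3 m1 m2 m3 n1 n2 n3 w1 w2 w3 z1 z2 z3 om A B :
  0 < a1*a1+a2*a2+a3*a3 -> 0 < om -> z1*z1+z2*z2+z3*z3 = 1 ->
  w1 - (w1*a1+w2*a2+w3*a3)/(a1*a1+a2*a2+a3*a3) * a1 = om * z1 ->
  w2 - (w1*a1+w2*a2+w3*a3)/(a1*a1+a2*a2+a3*a3) * a2 = om * z2 ->
  w3 - (w1*a1+w2*a2+w3*a3)/(a1*a1+a2*a2+a3*a3) * a3 = om * z3 ->
  A = (m1 - (m1*a1+m2*a2+m3*a3)/(a1*a1+a2*a2+a3*a3)*a1)*z1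
    + (m2 - (m1*a1+m2*a2+m3*a3)/(a1*a1+a2*a2+a3*a3)*a2)*z2
    + (m3 - (m1*a1+m2*a2+m3*a3)/(a1*a1+a2*a2+a3*a3)*a3)*z3 ->
  B = (n1 - (n1*a1+n2*a2+n3*a3)/(a1*a1+a2*a2+a3*a3)*a1)*z1
    + (n2 - (n1*a1+n2*a2+n3*a3)/(a1*a1+a2*a2+a3*a3)*a2)*z2
    + (n3 - (n1*a1+n2*a2+n3*a3)/(a1*a1+a2*a2+a3*a3)*a3)*z3 ->
  let E := a1*a1+a2*a2+a3*a3 in
  let Eu := 2 * (m1 * a1 + m2 * a2 + m3 * a3) in
  let Ev := 2 * (n1 * a1 + n2 * a2 + n3 * a3) in
  let Fv := a1 * w1 + a2 * w2 + a3 * w3 in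
  let Gvv := 2 * (w1 * w1 + w2 * w2 + w3 * w3) in
  let Guv := 2 * (n1 * w1 + n2 * w2 + n3 * w3) in
  let FE := m1 * w1 + m2 * w2 + m3 * w3 in
  ((Eu / 2 * Fv - E * FE) * (Fv ^ 2 - E * (Gvv / 2))
       - (Ev / 2 * Fv - E * (Guv / 2)) ^ 2)
     / (sqrt (E * (E * (Gvv / 2) - Fv ^ 2))) ^ 3 = (A * om - B^2) / (E * om).
Proof.
  intros HE Hom Hz HW1 HW2 HW3 HA HB E Eu Ev Fv Gvv Guv FE.
  set (E0 := a1*a1+a2*a2+a3*a3) in *.
  set (wa := w1*a1+w2*a2+w3*a3) in *.
  assert (I1 : om * A = FE - (m1*a1+m2*a2+m3*a3) * wa / E0).
  { replace (om*A) with ((m1 - (m1*a1+m2*a2+m3*a3)/E0*a1)*(om*z1)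
    + (m2 - (m1*a1+m2*a2+m3*a3)/E0*a2)*(om*z2) + (m3 - (m1*a1+m2*a2+m3*a3)/E0*a3)*(om*z3))
    by (rewrite HA; ring).
    rewrite <- HW1, <- HW2, <- HW3. unfold FE, wa, E0. field. unfold E0 in HE. lra. }
  assert (I2 : om * B = (n1*w1+n2*w2+n3*w3) - (n1*a1+n2*a2+n3*a3) * wa / E0).
  { replace (om*B) with ((n1 - (n1*a1+n2*a2+n3*a3)/E0*a1)*(om*z1)
    + (n2 - (n1*a1+n2*a2+n3*a3)/E0*a2)*(om*z2) + (n3 - (n1*a1+n2*a2+n3*a3)/E0*a3)*(om*z3))
    by (rewrite HB; ring).
    rewrite <- HW1, <- HW2, <- HW3. unfold wa, E0. field. unfold E0 in HE. lra. }
  assert (I3 : om * om = (w1*w1+w2*w2+w3*w3) - wa * wa / E0).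
  { replace (om*om) with ((om*z1)*(om*z1)+(om*z2)*(om*z2)+(om*z3)*(om*z3))
      by (replace (om*om) with (om*om*(z1*z1+z2*z2+z3*z3)) by (rewrite Hz; ring); ring).
    rewrite <- HW1, <- HW2, <- HW3. unfold wa, E0. field. unfold E0 in HE. lra. }
  assert (HFv : Fv = wa) by (unfold Fv, wa; ring).
  assert (HD : E * (E * (Gvv / 2) - Fv ^ 2) = (E * om) * (E * om)).
  { unfold E, Gvv. rewrite HFv. fold E0. replace (E0*om*(E0*om)) with (E0*E0*(om*om)) by ring. rewrite I3.
    field. lra. }
  rewrite HD, sqrt_square by (unfold E; apply Rmult_le_pos; lra).
  assert (HN1 : Eu / 2 * Fv - E * FE = - E * (om * A)).
  { rewrite I1, HFv. unfold Eu, E. fold E0. field. lra. }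
  assert (HN2 : Fv ^ 2 - E * (Gvv / 2) = - E * (om * om)).
  { rewrite I3, HFv. unfold Gvv, E. fold E0. field. lra. }
  assert (HN3 : Ev / 2 * Fv - E * (Guv / 2) = - E * (om * B)).
  { rewrite I2, HFv. unfold Ev, Guv, E. fold E0. field. lra. }
  rewrite HN1, HN2, HN3. unfold E. fold E0. field. split; lra.
Qed.


Ltac vunfg := unfold dot, vsub, vadd, vscal, vzero, mk3, c1, c2, c3; simpl.

Theorem mainTheorem4 (f : R -> R -> R3) (u0 v0 : R) :
  smooth_map f ->
  corank1_at f u0 v0 ->
  (is_nondeg_parabola (curv_parabola f u0 v0) \/ is_halfline (curv_parabola f u0 v0)) ->
  Vpu f u0 v0 <> vzero ->
  Vpv f u0 v0 = vzero ->
  forall va : R3, axial_vector (curv_parabola f u0 v0) va ->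
  let E := EE f u0 v0 in
  let Eu := pu (EE f) u0 v0 in
  let Ev := pv (EE f) u0 v0 in
  let Evv := pv (pv (EE f)) u0 v0 in
  let Fv := pv (FF f) u0 v0 in
  let Fuv := pv (pu (FF f)) u0 v0 in
  let Guv := pv (pu (GG f)) u0 v0 in
  let Gvv := pv (pv (GG f)) u0 v0 in
  is_min (axial_values f u0 v0 va)
    (((Eu / 2 * Fv - E * (Fuv - Evv / 2)) * (Fv ^ 2 - E * (Gvv / 2))
       - (Ev / 2 * Fv - E * (Guv / 2)) ^ 2)
     / (sqrt (E * (E * (Gvv / 2) - Fv ^ 2))) ^ 3).
Proof.
  intros Hsm _ _ Hu Hv va Hax. cbv zeta.
  set (g1 := fun a b => c1 (f a b)). set (g2 := fun a b => c2 (f a b)).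
  set (g3 := fun a b => c3 (f a b)).
  destruct Hsm as (H1 & H2 & H3).
  change (smooth2 g1) in H1. change (smooth2 g2) in H2. change (smooth2 g3) in H3.
  assert (Z1 : pv g1 u0 v0 = 0) by exact (f_equal c1 Hv).
  assert (Z2 : pv g2 u0 v0 = 0) by exact (f_equal c2 Hv).
  assert (Z3 : pv g3 u0 v0 = 0) by exact (f_equal c3 Hv).
  pose proof (values g1 g2 g3 u0 v0 H1 H2 H3 Z1 Z2 Z3) as VV. cbv zeta in VV.
  destruct VV as (VEu & VEv & VFv & VGvv & VGuv & VFuv).
  change (EE f) with (sum3 pu pu g1 g2 g3).
  change (FF f) with (sum3 pu pv g1 g2 g3).
  change (GG f) with (sum3 pv pv g1 g2 g3).
  rewrite VEu, VEv, VFv, VGvv, VGuv, VFuv.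
  set (fu := Vpu f u0 v0).
  assert (HE0 : 0 < dot fu fu) by (apply dot_pos; exact Hu).
  set (T := tangent_space f u0 v0).
  assert (HT : forall t, T t <-> exists l, t = vscal l fu).
  { intro t; unfold T, tangent_space, dfq; fold fu; rewrite Hv. split.
    - intros (x & y & ->). exists x. apply R3_ext; vunfg; ring.
    - intros (l & ->). exists l, 0. apply R3_ext; vunfg; ring. }
  assert (Hff : forall a b, first_ff f u0 v0 a b = a^2 * dot fu fu).
  { intros a b. unfold first_ff, dfq. fold fu. rewrite Hv. vunfg. ring. }
  set (M := nproj T (Vpu (Vpu f) u0 v0)).
  set (U := nproj T (Vpv (Vpu f) u0 v0)).
  set (W := nproj T (Vpv (Vpv f) u0 v0)).
  assert (HD : forall n, curv_parabola f u0 v0 n <-> exists a b, a^2 * dot fu fu = 1 /\ n = SS M U W a b).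
  { intro n. unfold curv_parabola. split; intros (a & b & h1 & h2); exists a, b;
    [rewrite Hff in h1 | rewrite Hff]; split; auto. }
  destruct (axial_abs (dot fu fu) M U W va _ HE0 HD Hax) as (Hva1 & om & Hom & HWv).
  set (A := dot M va). set (B := dot U va).
  assert (HWva : dot W va = om) by (rewrite HWv, dot_vscal_l, Hva1; ring).
  assert (HK : forall K, K = (A*om - B^2)/(dot fu fu * om) -> is_min (axial_values f u0 v0 va) K).
  { intros K ->. split.
    - set (a0 := / sqrt (dot fu fu)).
      assert (Hs : 0 < sqrt (dot fu fu)) by (apply sqrt_lt_R0; lra).
      assert (Ha0 : a0^2 = / dot fu fu).
      { unfold a0. rewrite <- (sqrt_sqrt (dot fu fu)) at 2 by lra. field. lra. }
      exists a0, (-a0*B/om). split.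
      + rewrite Hff, Ha0. field. lra.
      + change (second_ff f u0 v0 a0 (-a0*B/om)) with (SS M U W a0 (-a0*B/om)).
        rewrite dot_SS, HWva. fold A B.
        replace (a0 ^ 2 * A + 2 * a0 * (- a0 * B / om) * B + (- a0 * B / om) ^ 2 * om)
          with (a0^2 * (A - B^2/om)) by (field; lra).
        rewrite Ha0. field. split; lra.
    - intros x (a & b & h1 & ->). rewrite Hff in h1.
      change (second_ff f u0 v0 a b) with (SS M U W a b).
      rewrite dot_SS, HWva. fold A B.
      assert (Ha : a^2 = / dot fu fu).
      { apply (Rmult_eq_reg_r (dot fu fu)); [rewrite h1, Rinv_l; lra | lra]. }
      assert (e1 : (A * om - B ^ 2) / (dot fu fu * om) = a^2*A - a^2*B^2/om).
      { rewrite Ha. field. split; lra. }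
      assert (e2 : a^2*A + 2*a*b*B + b^2*om - (a^2*A - a^2*B^2/om) = (a*B + b*om)^2/om).
      { field. lra. }
      assert (0 <= (a*B + b*om)^2/om) by (apply Rdiv_le_0_compat; [apply pow2_ge_0 | lra]).
      lra. }
  apply HK.
  unfold A, B, M, U, W in *.
  rewrite !(nproj_line T fu _ HE0 HT) in *.
  set (a1 := pu g1 u0 v0). set (a2 := pu g2 u0 v0). set (a3 := pu g3 u0 v0).
  set (m1 := pu (pu g1) u0 v0). set (m2 := pu (pu g2) u0 v0). set (m3 := pu (pu g3) u0 v0).
  set (n1 := pv (pu g1) u0 v0). set (n2 := pv (pu g2) u0 v0). set (n3 := pv (pu g3) u0 v0).
  set (w1 := pv (pv g1) u0 v0). set (w2 := pv (pv g2) u0 v0). set (w3 := pv (pv g3) u0 v0).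
  assert (Efu : fu = mk3 a1 a2 a3) by reflexivity.
  assert (Efuu : Vpu (Vpu f) u0 v0 = mk3 m1 m2 m3) by reflexivity.
  assert (Efuv : Vpv (Vpu f) u0 v0 = mk3 n1 n2 n3) by reflexivity.
  assert (Efvv : Vpv (Vpv f) u0 v0 = mk3 w1 w2 w3) by reflexivity.
  rewrite Efuu, Efuv, Efvv in *. rewrite Efu in *.
  destruct va as [[z1 z2] z3].
  unfold sum3, fadd, fmul. fold a1 a2 a3 m1 m2 m3 n1 n2 n3 w1 w2 w3.
  pose proof (f_equal c1 HWv) as hw1. pose proof (f_equal c2 HWv) as hw2. pose proof (f_equal c3 HWv) as hw3.
  vunfg. unfold dot, vsub, vadd, vscal, vzero, mk3, c1, c2, c3 in *; simpl in *.
  apply final_alg with (z1 := z1) (z2 := z2) (z3 := z3); try lra. 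
Qed.
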